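(* For integers $k\ge1$ define the differential operators in the variables $t_1,t_2,\dots$ $$L_k=\frac{\partial}{\partial t_k}-\sum_{n\ge1}n\,t_n\,\frac{\partial}{\partial t_{n+k}}.$$ Then (i) $[L_n,L_m]=(m-n)L_{m+n}$ for all $n,m\ge1$; and (ii) if $U$ solves $\sum_{n\ge1}n t_n U^n=1$ (with $U=\frac1{t_1}+\dots$) and $f_0$ is any function with $\partial f_0/\partial t_n=U^n$ for all $n\ge1$ (e.g. $f_0=\sum_{n\ge1}t_nU^n-\ln U$), then $L_kf_0=0$ for all $k\ge1$.
   Context: The operators act on (formal power series or smooth) functions of countably many variables $t_1,t_2,\dots$; each application involves only finitely many nonzero terms on functions depending on finitely many variables, or is understood formally. *)

(* Defs.v *)
From HB Require Import structures.
From mathcomp Require Import all_boot all_order all_algebra.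
From Stdlib Require Import Reals.
Set Implicit Arguments. Unset Strict Implicit. Unset Printing Implicit Defensive.
Import GRing.Theory.

(* ---------- Part (i): abstract algebra of functions of t_1, t_2, ... ----------
   A : commutative ring of "functions"; t n : the coordinate function t_n (n >= 1);
   D n : the partial derivative d/dt_n (n >= 1).  For f depending only on
   t_1..t_N (i.e. D j f = 0 for j > N) the infinite sum in L_k has only the
   terms n <= N nonzero, so L_k f is the truncated sum below. *)
Section PartI.
Local Open Scope ring_scope.
Variable A : comRingType.

Definition Lop (t : nat -> A) (D : nat -> A -> A) (N k : nat) (f : A) : A :=
  D k f - \sum_(1 <= n < N.+1) n%:R * t n * D (n + k)%N f.

Definition is_derivation (D : A -> A) : Prop :=
  (forall x y, D (x + y) = D x + D y) /\ (forall x y, D (x * y) = D x * y + x * D y).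

Definition kron (m n : nat) : A := (m == n)%:R.

Definition int_coef (z : int) : A := z%:~R.
End PartI.

Section PartII.
Local Open Scope R_scope.

Definition upd (t : nat -> R) (n : nat) (x : R) : nat -> R :=
  fun i => if Nat.eqb i n then x else t i.

Definition has_partial (f : (nat -> R) -> R) (n : nat) (t : nat -> R) (l : R) : Prop :=
  derivable_pt_lim (fun x => f (upd t n x)) (t n) l.

Definition L_value (f : (nat -> R) -> R) (k : nat) (t : nat -> R) (v : R) : Prop :=
  exists (dk s : R) (g : nat -> R),
    has_partial f k t dk /\
    (forall n, (1 <= n)%nat -> has_partial f (n + k) t (g n)) /\
    infinite_sum (fun n => INR (S n) * t (S n) * g (S n)) s /\
    v = dk - s.

Definition U_equation_sum (t : nat -> R) (u c : R) : Prop :=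
  infinite_sum (fun n => INR (S n) * t (S n) * u ^ (S n)) c.
End PartII.

(* Main.v *)
Require Import Defs.
From HB Require Import structures.
From mathcomp Require Import all_boot all_order all_algebra.
From mathcomp Require Import ring.
Import GRing.Theory.


Section P1.
Local Open Scope ring_scope.
Variable A : comRingType.
Variable t : nat -> A.
Variable D : nat -> A -> A.
Hypothesis HD : forall j : nat, (0 < j)%N -> is_derivation (D j).
Hypothesis HC : forall i j : nat, (0 < i)%N -> (0 < j)%N -> forall x, D i (D j x) = D j (D i x).
Hypothesis Ht : forall i j : nat, (0 < i)%N -> (0 < j)%N -> D i (t j) = kron A i j.
Variable N : nat.

Lemma Dadd j x y : (0 < j)%N -> D j (x + y) = D j x + D j y.
Proof. by move=> hj; case: (@HD j hj). Qed.
Lemma Dmul j x y : (0 < j)%N -> D j (x * y) = D j x * y + x * D j y.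
Proof. by move=> hj; case: (@HD j hj). Qed.
Lemma D0 j : (0 < j)%N -> D j 0 = 0.
Proof.
move=> hj; have h : D j 0 + D j 0 = D j 0 + 0 by rewrite addr0 -Dadd // addr0.
by move/addrI: h.
Qed.
Lemma DN j x : (0 < j)%N -> D j (- x) = - D j x.
Proof.
move=> hj; apply/eqP; rewrite -addr_eq0 addrC -(Dadd j x (-x) hj) addrN D0 //.
Qed.
Lemma DB j x y : (0 < j)%N -> D j (x - y) = D j x - D j y.
Proof. by move=> hj; rewrite Dadd // DN. Qed.
Lemma Dsum j I (r : seq I) (P : pred I) (F : I -> A) : (0 < j)%N ->
  D j (\sum_(i <- r | P i) F i) = \sum_(i <- r | P i) D j (F i).
Proof. move=> hj; apply: (big_morph (D j)); [move=> x y; exact: Dadd | exact: D0]. Qed.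
Lemma D1 j : (0 < j)%N -> D j 1 = 0.
Proof.
move=> hj; have h : D j 1 + D j 1 = D j 1 + 0.
  by rewrite addr0 -{3}(mulr1 1) Dmul // mulr1 mul1r.
by move/addrI: h.
Qed.
Lemma Dnat j a : (0 < j)%N -> D j (a%:R) = 0.
Proof.
move=> hj; elim: a => [|a IH]; first exact: D0.
by rewrite mulrS Dadd // D1 // IH addr0.
Qed.
Lemma Dterm j a c X : (0 < j)%N -> (0 < c)%N ->
  D j (a%:R * t c * X) = a%:R * kron A j c * X + a%:R * t c * D j X.
Proof.
move=> hj hc; rewrite Dmul // Dmul // Dnat // Ht //; ring.
Qed.

Lemma kron_sum c (Y : nat -> A) M : (0 < c)%N ->
  \sum_(1 <= a < M.+1) a%:R * kron A c a * Y a = if (c <= M)%N then c%:R * Y c else 0.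
Proof.
move=> hc; elim: M => [|M IH].
  by rewrite big_geq // leqNgt hc.
rewrite big_nat_recr //= IH /kron.
case: (ltngtP c M.+1) => h.
- by rewrite ltnS in h; rewrite h mulr0 mul0r addr0.
- by rewrite leqNgt (ltnW h) /= mulr0 mul0r addr0.
- by rewrite h ltnn add0r mulr1.
Qed.

Definition S m g := \sum_(1 <= a < N.+1) a%:R * t a * D (a + m)%N g.

Lemma LopE k g : Lop t D N k g = D k g - S k g.
Proof. by []. Qed.

Variable f : A.
Hypothesis Hf : forall j : nat, (N < j)%N -> D j f = 0.

Lemma DS j m : (0 < j)%N -> (0 < m)%N ->
  D j (S m f) = j%:R * D (j + m)%N f
     + \sum_(1 <= a < N.+1) a%:R * t a * D j (D (a + m)%N f).
Proof.
move=> hj hm; rewrite /S Dsum //.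
rewrite (eq_big_nat _ _ (F2 := fun a => a%:R * kron A j a * D (a + m)%N f
     + a%:R * t a * D j (D (a + m)%N f))); last first.
  by move=> a /andP [ha _]; rewrite Dterm.
rewrite big_split /= kron_sum //.
case: leqP => h //.
by rewrite Hf ?mulr0 // (leq_trans h) // leq_addr.
Qed.

Definition P1 n m := \sum_(1 <= a < N.+1) a%:R * t a * D n (D (a + m)%N f).
Definition P2 n m := \sum_(1 <= b < N.+1) b%:R * t b * D (b + n)%N (D m f).
Definition P3 n m := \sum_(1 <= b < N.+1) b%:R * t b * ((b + n)%N%:R * D (b + n + m)%N f).
Definition P4 n m := \sum_(1 <= b < N.+1) b%:R * t b *
   \sum_(1 <= a < N.+1) a%:R * t a * D (b + n)%N (D (a + m)%N f).

Lemma expand n m : (0 < n)%N -> (0 < m)%N ->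
  Lop t D N n (Lop t D N m f) =
  D n (D m f) - n%:R * D (n + m)%N f - P1 n m - P2 n m + P3 n m + P4 n m.
Proof.
move=> hn hm; rewrite !LopE DB // DS //.
have -> : S n (D m f - S m f) = P2 n m - P3 n m - P4 n m.
  rewrite /S /P2 /P3 /P4 -!sumrB; apply: eq_bigr => b _.
  rewrite DB ?addn_gt0 ?hn ?orbT // DS ?addn_gt0 ?hn ?orbT //; ring.
rewrite /P1; ring.
Qed.

Lemma P2E n m : (0 < n)%N -> (0 < m)%N -> P2 n m = P1 m n.
Proof.
move=> hn hm; apply: eq_bigr => b _; rewrite HC // addn_gt0 hn orbT //.
Qed.

Lemma P4E n m : (0 < n)%N -> (0 < m)%N -> P4 n m = P4 m n.
Proof.
move=> hn hm; rewrite /P4.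
under eq_bigr do rewrite mulr_sumr.
rewrite exchange_big /=; apply: eq_bigr => a _; rewrite mulr_sumr.
apply: eq_bigr => b _; rewrite HC ?addn_gt0 ?hn ?hm ?orbT //; ring.
Qed.

Lemma P3E n m : P3 n m - P3 m n =
  - ((m%:R - n%:R) * \sum_(1 <= b < N.+1) b%:R * t b * D (b + (m + n))%N f).
Proof.
rewrite /P3 -sumrB mulr_sumr -sumrN; apply: eq_bigr => b _.
rewrite -!addnA (addnC n m) !natrD; ring.
Qed.

Lemma part1 n m : (0 < n)%N -> (0 < m)%N ->
  Lop t D N n (Lop t D N m f) - Lop t D N m (Lop t D N n f)
  = int_coef A (Posz m - Posz n) * Lop t D N (m + n) f.
Proof.
move=> hn hm; rewrite !expand // (P2E n m hn hm) (P2E m n hm hn) (P4E n m hn hm) (HC n m hn hm).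
have e := P3E n m.
rewrite /int_coef intrD intrN LopE (addnC n m).
rewrite /S.
move: e; set s := \sum_(1 <= b < N.+1) _ => e.
have -> : P3 n m = P3 m n - (m%:R - n%:R) * s by rewrite -e; ring.
ring.
Qed.
End P1.

From Stdlib Require Import Reals.
Lemma part2 (U f0 : (nat -> R) -> R) (t : nat -> R) :
      U_equation_sum t (U t) 1%R ->
      (forall n, (1 <= n)%N -> has_partial f0 n t (pow (U t) n)) ->
      forall k, (1 <= k)%N -> L_value f0 k t 0%R.
Proof.
intros HU Hp k Hk.
exists (pow (U t) k), (Rmult 1 (pow (U t) k)), (fun n => pow (U t) (n + k)).
split; [apply Hp; exact Hk|]. split.
{ intros n Hn. apply Hp. by rewrite (leq_trans Hk) // leq_addl. }
split; last by rewrite Rmult_1_l Rminus_diag.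
have Hc : Un_cv (fun _ => pow (U t) k) (pow (U t) k).
{ intros eps He; exists 0%nat; intros; unfold Rdist; rewrite Rminus_diag Rabs_R0; exact He. }
have H := CV_mult _ _ _ _ HU Hc.
apply: (Un_cv_ext _ _ _ _ H) => N.
rewrite Rmult_comm scal_sum; apply: sum_eq => i _.
by rewrite /= pow_add !Rmult_assoc.
Qed.
Theorem mainTheorem5 :
  (* (i) [L_n, L_m] = (m - n) L_{m+n} *)
  (forall (A : comRingType) (t : nat -> A) (D : nat -> A -> A),
      (forall j, (0 < j)%N -> is_derivation (D j)) ->
      (forall i j, (0 < i)%N -> (0 < j)%N -> forall x, D i (D j x) = D j (D i x)) ->
      (forall i j, (0 < i)%N -> (0 < j)%N -> D i (t j) = kron A i j) ->
      forall (N : nat) (f : A),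
        (forall j, (N < j)%N -> D j f = GRing.zero) ->
        forall n m : nat, (0 < n)%N -> (0 < m)%N ->
          GRing.add (Lop t D N n (Lop t D N m f)) (GRing.opp (Lop t D N m (Lop t D N n f)))
          = GRing.mul (int_coef A (GRing.add (Posz m) (GRing.opp (Posz n))))
                      (Lop t D N (m + n) f))
  /\
  (* (ii) if sum_{n>=1} n t_n U^n = 1 and df0/dt_n = U^n for all n >= 1, then L_k f0 = 0 *)
  (forall (U f0 : (nat -> R) -> R) (t : nat -> R),
      U_equation_sum t (U t) 1%R ->
      (forall n, (1 <= n)%N -> has_partial f0 n t (pow (U t) n)) ->
      forall k, (1 <= k)%N -> L_value f0 k t 0%R).
Proof.
split.
- move=> A t D HD HC Ht N f Hf n m hn hm; exact: (@part1 A t D HD HC Ht N f Hf n m hn hm).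
- exact: part2.
Qed.
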